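(* Let $N\ge3$, $N=2g+1$ or $2g+2$ with $g\ge1$. On the $(2g+1)$-dimensional space with coordinates $(\lambda_1,\dots,\lambda_g,z_1,\dots,z_g,v)$ (with $\lambda_j$ pairwise distinct and nonzero) consider the Poisson brackets $$\{\lambda_j,z_k\}=\delta_{jk}z_k,\quad \{\lambda_j,\lambda_k\}=\{z_j,z_k\}=\{\lambda_j,v\}=\{z_j,v\}=0.$$ Put $b_0=1,\tilde a_0=0$ if $N=2g+1$ and $b_0=v,\tilde a_0=1$ if $N=2g+2$, and define $$B(\lambda)=b_0\prod_{j=1}^g(\lambda-\lambda_j),\qquad \tilde A(\lambda)=\Bigl(\frac{\tilde a_0}{b_0}+\sum_{j=1}^g\frac{z_j}{B'(\lambda_j)(\lambda-\lambda_j)\lambda_j}\Bigr)B(\lambda).$$ Then, for independent parameters $\lambda,\mu$, $$\{\tilde A(\lambda),\tilde A(\mu)\}=\{B(\lambda),B(\mu)\}=0,\qquad \{\tilde A(\lambda),B(\mu)\}=\frac{B(\lambda)\tilde A(\mu)-\tilde A(\lambda)B(\mu)}{\lambda-\mu}.$$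
   Context: $B'(\lambda_j)=b_0\prod_{k\ne j}(\lambda_j-\lambda_k)$. $\tilde A$ is the unique polynomial of degree $\le g$ with leading coefficient $\tilde a_0$ at $\lambda^g$ and $\tilde A(\lambda_j)\lambda_j=z_j$. Brackets of polynomials in $\lambda$ are taken coefficientwise. *)

(* Defs.v *)
From HB Require Import structures.
From mathcomp Require Import all_boot all_order all_algebra.
From mathcomp Require Import all_classical all_reals all_analysis.
Set Implicit Arguments. Unset Strict Implicit. Unset Printing Implicit Defensive.
Import Order.TTheory GRing.Theory Num.Theory.
Import numFieldNormedType.Exports.
Local Open Scope ring_scope.

Section Defs.
Variables (R : realType) (g : nat).

(* Phase space R^(2g+1) with coordinates (lambda_1..lambda_g, z_1..z_g, v),
   stored in a row vector: lambda_j at index j, z_j at index g+j, v at 2g. *)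
Definition pt := 'rV[R]_(g + g).+1.
Definition lam_idx (j : 'I_g) : 'I_(g + g).+1 := inord j.
Definition z_idx (j : 'I_g) : 'I_(g + g).+1 := inord (g + j).
Definition v_idx : 'I_(g + g).+1 := inord (g + g).

Definition lam (x : pt) (j : 'I_g) : R := x ord0 (lam_idx j).
Definition zc (x : pt) (j : 'I_g) : R := x ord0 (z_idx j).
Definition vc (x : pt) : R := x ord0 v_idx.

Definition pd (F : pt -> R) (x : pt) (i : 'I_(g + g).+1) : R :=
  'D_(delta_mx ord0 i) F x.

(* The Poisson bracket determined (via the Leibniz rule) by
   {lambda_j, z_k} = delta_jk z_k, all other coordinate brackets 0:
   {F,G} = sum_j z_j (dF/dlambda_j dG/dz_j - dF/dz_j dG/dlambda_j). *)
Definition pbr (F G : pt -> R) (x : pt) : R :=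
  \sum_(j < g) zc x j *
    (pd F x (lam_idx j) * pd G x (z_idx j) - pd F x (z_idx j) * pd G x (lam_idx j)).

Definition b0 (N : nat) (x : pt) : R := if odd N then 1 else vc x.
Definition a0t (N : nat) : R := if odd N then 0 else 1.

Definition Bpol (N : nat) (x : pt) : {poly R} :=
  b0 N x *: \prod_(j < g) ('X - (lam x j)%:P).

(* tilde A(lambda) = (a0/b0 + sum_j z_j / (B'(lambda_j) (lambda - lambda_j) lambda_j)) B(lambda),
   with B(lambda)/(lambda - lambda_j) the exact polynomial quotient. *)
Definition Atil (N : nat) (x : pt) : {poly R} :=
  (a0t N / b0 N x) *: Bpol N x +
  \sum_(j < g) (zc x j / ((Bpol N x)^`().[lam x j] * lam x j)) *:
                 (Bpol N x %/ ('X - (lam x j)%:P)).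

End Defs.

(* Main.v *)
Require Import Defs.
From HB Require Import structures.
From mathcomp Require Import all_boot all_order all_algebra.
From mathcomp Require Import all_classical all_reals all_analysis.
From mathcomp Require Import ring lra.
Set Implicit Arguments. Unset Strict Implicit. Unset Printing Implicit Defensive.
Import Order.TTheory GRing.Theory Num.Theory.
Import numFieldNormedType.Exports.
Local Open Scope ring_scope.
Section Alg.
Variables (R : realType) (g : nat).
Implicit Types (l z : 'I_g -> R) (x y : pt R g).

Definition Pj l (j : 'I_g) (t : R) := \prod_(k < g | k != j) (t - l k).
Definition Dj l (j : 'I_g) := \prod_(k < g | k != j) (l j - l k).
Definition Af (a : R) l z (t : R) :=
  a * \prod_(k < g) (t - l k) + \sum_(k < g) z k * (Pj l k t / (Dj l k * l k)).

Lemma Bpol_eval N y t : (Bpol N y).[t] = b0 N y * \prod_(k < g) (t - lam y k).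
Proof. by rewrite /Bpol hornerZ horner_prod; under eq_bigr do rewrite hornerXsubC. Qed.

Lemma divp_j N y j : Bpol N y %/ ('X - (lam y j)%:P) =
  b0 N y *: \prod_(k < g | k != j) ('X - (lam y k)%:P).
Proof.
by rewrite /Bpol (bigD1 j) //= divpZl mulKp // polyXsubC_eq0.
Qed.

Lemma deriv_j N y j : (Bpol N y)^`().[lam y j] = b0 N y * Dj (lam y) j.
Proof.
rewrite /Bpol derivZ hornerZ (bigD1 j) //= derivM derivXsubC mul1r hornerD.
rewrite hornerM hornerXsubC subrr mul0r addr0 horner_prod.
by under eq_bigr do rewrite hornerXsubC.
Qed.

Lemma Atil_eval N y t : b0 N y != 0 ->
  (Atil N y).[t] = Af (a0t R N) (lam y) (zc y) t.
Proof.
move=> hb; rewrite /Atil /Af hornerD hornerZ Bpol_eval horner_sum.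
congr (_ + _).
  by rewrite mulrA divfK.
apply: eq_bigr => j _; rewrite hornerZ divp_j hornerZ horner_prod deriv_j.
under eq_bigr do rewrite hornerXsubC.
rewrite -/(Pj (lam y) j t) !invfM.
set E := (Dj _ _)^-1; set F := (lam y j)^-1; set P := Pj _ _ _; set b := b0 N y.
rewrite [LHS](_ : _ = zc y j * (P * (E * F)) * (b^-1 * b)); last by ring.
by rewrite mulVf // mulr1.
Qed.

Definition shift l (j : 'I_g) (h : R) := fun k => l k + h * (j == k)%:R.
Definition P2 l (a b : 'I_g) (t : R) := \prod_(m < g | (m != a) && (m != b)) (t - l m).
Definition D2 l (a b : 'I_g) := \prod_(m < g | (m != a) && (m != b)) (l a - l m).

Lemma shift_j l j h : shift l j h j = l j + h.
Proof. by rewrite /shift eqxx mulr1. Qed.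
Lemma shift_k l j h k : k != j -> shift l j h k = l k.
Proof. by move=> hk; rewrite /shift eq_sym (negbTE hk) mulr0 addr0. Qed.

Lemma Pj_split l j k t : k != j -> Pj l k t = (t - l j) * P2 l k j t.
Proof. by move=> hk; rewrite /Pj (bigD1 j) //= eq_sym. Qed.
Lemma Dj_split l j k : k != j -> Dj l k = (l k - l j) * D2 l k j.
Proof. by move=> hk; rewrite /Dj (bigD1 j) //= eq_sym. Qed.
Lemma P2C l j k t : P2 l j k t = P2 l k j t.
Proof. by apply: eq_bigl => m; rewrite andbC. Qed.

Definition p0 a l j t : {poly R} := (a * Pj l j t) *: ((t - l j)%:P - 'X).
Definition p1 l z j t : {poly R} := (z j * Pj l j t)%:P.
Definition q1 l j : {poly R} :=
  (\prod_(k < g | k != j) ('X + (l j - l k)%:P)) * ('X + (l j)%:P).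
Definition p2 l z j k t : {poly R} := (z k * P2 l k j t) *: ((t - l j)%:P - 'X).
Definition q2 l j k : {poly R} := (D2 l k j * l k) *: ((l k - l j)%:P - 'X).

Lemma Af_lline a l z j t h :
  Af a (shift l j h) z t = (p0 a l j t).[h] / (1 : {poly R}).[h]
    + (p1 l z j t).[h] / (q1 l j).[h]
    + \sum_(k < g | k != j) (p2 l z j k t).[h] / (q2 l j k).[h].
Proof.
rewrite /Af hornerC divr1 -addrA; congr (_ + _).
  rewrite (bigD1 j) //= /p0 hornerZ hornerD hornerN hornerC hornerX shift_j.
  rewrite (eq_bigr (fun k => t - l k)); last by move=> k hk; rewrite shift_k.
  rewrite /Pj; ring.
rewrite (bigD1 j) //=.
congr (_ + _).
  rewrite /p1 /q1 hornerC hornerM horner_prod hornerD hornerX hornerC shift_j.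
  rewrite mulrA (addrC h); congr (_ * _ / (_ * _)).
    by rewrite /Pj; apply: eq_bigr => k hk; rewrite shift_k.
  rewrite /Dj shift_j; apply: eq_bigr => k hk.
  by rewrite hornerD hornerX hornerC shift_k // addrA (addrC h).
apply: eq_bigr => k hk.
rewrite /p2 /q2 !hornerZ !hornerD !hornerN !hornerC !hornerX shift_k //.
rewrite (Pj_split _ _ hk) (Dj_split _ hk) shift_j /P2 /D2.
have -> : \prod_(m < g | (m != k) && (m != j)) (t - shift l j h m) =
          \prod_(m < g | (m != k) && (m != j)) (t - l m).
  by apply: eq_bigr => m /andP [_ hm]; rewrite shift_k.
rewrite [shift l j h k]shift_k //.
have -> : \prod_(m < g | (m != k) && (m != j)) (l k - shift l j h m) =
          \prod_(m < g | (m != k) && (m != j)) (l k - l m).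
  by apply: eq_bigr => m /andP [_ hm]; rewrite shift_k.
rewrite !opprD !addrA !invfM; ring.
Qed.

Lemma is_derive_bsum (I : finType) (P : pred I) (f : I -> R -> R) (df : I -> R)
  (x : R) : (forall i, P i -> is_derive x 1 (f i) (df i)) ->
  is_derive x 1 (fun h => \sum_(i | P i) f i h) (\sum_(i | P i) df i).
Proof.
move=> H; rewrite -fct_sumE.
elim/big_ind2 : _ => //; last by move=> *; exact: is_deriveD.
exact: is_derive_cst.
Qed.

Lemma is_derive_ratio (p q : {poly R}) : q.[0] != 0 ->
  is_derive (0:R) 1 (fun h => p.[h] / q.[h])
    (p^`().[0] / q.[0] - p.[0] * q^`().[0] / q.[0] ^+ 2).
Proof.
move=> hq.
have hp := is_derive_poly p 0.
have hv : is_derive (0:R) 1 (fun h => (q.[h])^-1) (- (q.[0]) ^- 2 *: q^`().[0]).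
  apply: DeriveDef; first by apply: derivableV => //.
  rewrite deriveV //; congr (_ *: _); exact: derive_val.
have := is_deriveM hp hv.
rewrite /=. move=> H. apply: is_derive_eq.
rewrite /GRing.scale /=. field. done.
Qed.

Lemma derive_ratio (p q : {poly R}) : q.[0] != 0 ->
  'D_1 (fun h => p.[h] / q.[h]) 0 =
    (p^`().[0] / q.[0] - p.[0] * q^`().[0] / q.[0] ^+ 2).
Proof. by move=> hq; have := is_derive_ratio p hq => H; rewrite derive_val. Qed.


Definition Kc l z j : R := - (z j * (q1 l j)^`().[0] / (q1 l j).[0] ^+ 2).
Definition dT2 l z j k t : R :=
  (p2 l z j k t)^`().[0] / (q2 l j k).[0]
  - (p2 l z j k t).[0] * (q2 l j k)^`().[0] / (q2 l j k).[0] ^+ 2.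

Lemma D_Af_l a l z j t : (q1 l j).[0] != 0 ->
  (forall k, k != j -> (q2 l j k).[0] != 0) ->
  'D_1 (fun h => Af a (shift l j h) z t) 0 =
  - (a * Pj l j t) + Pj l j t * Kc l z j + \sum_(k < g | k != j) dT2 l z j k t.
Proof.
move=> hq1 hq2.
rewrite (_ : (fun h => _) = (fun h => (p0 a l j t).[h] / (1 : {poly R}).[h]
    + (p1 l z j t).[h] / (q1 l j).[h]
    + \sum_(k < g | k != j) (p2 l z j k t).[h] / (q2 l j k).[h])); last first.
  by apply/funext => h; rewrite Af_lline.
have h1 : (1 : {poly R}).[0] != 0 by rewrite hornerC oner_neq0.
have H0 := is_derive_ratio (p0 a l j t) h1.
have H1 := is_derive_ratio (p1 l z j t) hq1.
have H2 := @is_derive_bsum _ (fun k => k != j) (fun k h => (p2 l z j k t).[h] / (q2 l j k).[h])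
   (fun k => dT2 l z j k t) 0 (fun k hk => is_derive_ratio _ (hq2 k hk)).
have H := is_deriveD (is_deriveD H0 H1) H2.
rewrite derive_val /Kc /p0 /p1.
set Q := q1 l j.
rewrite derivZ derivB !derivC derivX !hornerZ !horner0 !hornerC sub0r.
rewrite hornerN hornerC expr1n invr1 !mulr1 mulr0 ?mul0r ?subr0 ?mul0r ?sub0r.
set V := (Q.[0] ^+ 2)^-1.
ring.
Qed.

Lemma pd_line (F : pt R g -> R) x i :
  pd F x i = 'D_1 (fun h : R => F (h *: delta_mx ord0 i + x)) 0.
Proof.
rewrite /pd /derive /=; f_equal. f_equal. apply/funext => h /=.
by rewrite scale0r add0r addr0 [h *: 1]mulr1.
Qed.

Lemma coord_line x i h k :
  (h *: delta_mx ord0 i + x) ord0 k = x ord0 k + h * (i == k)%:R.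
Proof. by rewrite !mxE eqxx /= addrC eq_sym. Qed.

Lemma lam_idxE (j : 'I_g) : nat_of_ord (lam_idx j) = j.
Proof. by rewrite inordK // ltnS (leq_trans (ltnW (ltn_ord j))) // leq_addr. Qed.
Lemma z_idxE (j : 'I_g) : nat_of_ord (z_idx j) = (g + j)%N.
Proof. by rewrite inordK // ltnS leq_add2l ltnW. Qed.
Lemma v_idxE : nat_of_ord (v_idx g) = (g + g)%N.
Proof. by rewrite inordK. Qed.

Lemma eq_ll (j k : 'I_g) : (lam_idx j == lam_idx k) = (j == k).
Proof. by rewrite -val_eqE /= !lam_idxE. Qed.
Lemma eq_zz (j k : 'I_g) : (z_idx j == z_idx k) = (j == k).
Proof. by rewrite -val_eqE /= !z_idxE eqn_add2l. Qed.
Lemma eq_lz (j k : 'I_g) : (lam_idx j == z_idx k) = false.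
Proof.
apply/negbTE; rewrite -val_eqE /= lam_idxE z_idxE neq_ltn.
by rewrite (leq_trans (ltn_ord j)) ?leq_addr.
Qed.
Lemma eq_zl (j k : 'I_g) : (z_idx j == lam_idx k) = false.
Proof. by rewrite eq_sym eq_lz. Qed.
Lemma eq_lv (j : 'I_g) : (lam_idx j == v_idx g) = false.
Proof.
apply/negbTE; rewrite -val_eqE /= lam_idxE v_idxE neq_ltn.
by rewrite (leq_trans (ltn_ord j)) ?leq_addr.
Qed.
Lemma eq_zv (j : 'I_g) : (z_idx j == v_idx g) = false.
Proof.
apply/negbTE; rewrite -val_eqE /= z_idxE v_idxE neq_ltn.
by rewrite ltn_add2l ltn_ord.
Qed.


Lemma lam_lline x j h : lam (h *: delta_mx ord0 (lam_idx j) + x) = shift (lam x) j h.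
Proof. by apply/funext => k; rewrite /lam coord_line eq_ll. Qed.
Lemma zc_lline x j h : zc (h *: delta_mx ord0 (lam_idx j) + x) = zc x.
Proof. by apply/funext => k; rewrite /zc coord_line eq_lz mulr0 addr0. Qed.
Lemma vc_lline x j h : vc (h *: delta_mx ord0 (lam_idx j) + x) = vc x.
Proof. by rewrite /vc coord_line eq_lv mulr0 addr0. Qed.
Lemma lam_zline x j h : lam (h *: delta_mx ord0 (z_idx j) + x) = lam x.
Proof. by apply/funext => k; rewrite /lam coord_line eq_zl mulr0 addr0. Qed.
Lemma zc_zline x j h : zc (h *: delta_mx ord0 (z_idx j) + x) = shift (zc x) j h.
Proof. by apply/funext => k; rewrite /zc coord_line eq_zz. Qed.
Lemma vc_zline x j h : vc (h *: delta_mx ord0 (z_idx j) + x) = vc x.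
Proof. by rewrite /vc coord_line eq_zv mulr0 addr0. Qed.


Lemma Af_zline a l z j t h :
  Af a l (shift z j h) t = (Af a l z t)%:P.[h] + h * (Pj l j t / (Dj l j * l j)).
Proof.
rewrite hornerC /Af -addrA; congr (_ + _).
rewrite /shift; under eq_bigr do rewrite mulrDl.
rewrite big_split /=; congr (_ + _).
rewrite (bigD1 j) //= eqxx mulr1 big1 ?addr0 //.
by move=> k hk; rewrite eq_sym (negbTE hk) mulr0 mul0r.
Qed.

Lemma D_affine (A c : R) : 'D_1 (fun h : R => A%:P.[h] + h * c) 0 = c.
Proof.
have h1 : (1 : {poly R}).[0] != 0 by rewrite hornerC oner_neq0.
have H := is_derive_ratio (A%:P + c *: 'X) h1.
rewrite (_ : (fun h => _) = (fun h => (A%:P + c *: 'X).[h] / (1 : {poly R}).[h])).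
  rewrite derive_val derivD derivC derivZ derivX !hornerE.
  by rewrite -polyC1 derivC horner0 expr1n !divr1 mulr0 subr0.
by apply/funext => h; rewrite !hornerE divr1 mulrC.
Qed.

Lemma D_lin0 (A c : R) : 'D_1 (fun h : R => (c *: ((A%:P) - 'X)).[h]) 0 = - c.
Proof.
have h1 : (1 : {poly R}).[0] != 0 by rewrite hornerC oner_neq0.
have H := is_derive_ratio (c *: ((A%:P) - 'X)) h1.
rewrite (_ : (fun h => _) = (fun h => (c *: ((A%:P) - 'X)).[h] / (1 : {poly R}).[h])).
  rewrite derive_val derivZ derivB derivC derivX !hornerE.
  by rewrite -polyC1 derivC horner0 expr1n !divr1 mulr0 subr0 mulrN1.
by apply/funext => h; rewrite hornerC divr1.
Qed.

Lemma D_const (C : R) : 'D_1 (fun h : R => C) 0 = 0.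
Proof. exact: derive_cst. Qed.

Section Main.
Variables (N : nat) (x : pt R g).
Hypothesis hb : b0 N x != 0.
Let l := lam x.
Let z := zc x.
Let a := a0t R N.
Let b := b0 N x.

Lemma b0_lline j h : b0 N (h *: delta_mx ord0 (lam_idx j) + x) = b0 N x.
Proof. by rewrite /b0 vc_lline. Qed.
Lemma b0_zline j h : b0 N (h *: delta_mx ord0 (z_idx j) + x) = b0 N x.
Proof. by rewrite /b0 vc_zline. Qed.

Lemma pdA_z j t : pd (fun y => (Atil N y).[t]) x (z_idx j) = Pj l j t / (Dj l j * l j).
Proof.
rewrite pd_line (_ : (fun h => _) = (fun h : R => (Af a l z t)%:P.[h] + h * (Pj l j t / (Dj l j * l j)))).
  exact: D_affine.
apply/funext => h; rewrite Atil_eval ?b0_zline // lam_zline zc_zline.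
exact: Af_zline.
Qed.

Lemma pdB_z j t : pd (fun y => (Bpol N y).[t]) x (z_idx j) = 0.
Proof.
rewrite pd_line (_ : (fun h => _) = (fun h : R => b * \prod_(k < g) (t - l k))).
  exact: D_const.
by apply/funext => h; rewrite Bpol_eval b0_zline lam_zline.
Qed.

Lemma pdB_l j t : pd (fun y => (Bpol N y).[t]) x (lam_idx j) = - (b * Pj l j t).
Proof.
rewrite pd_line (_ : (fun h => _) = (fun h : R => ((b * Pj l j t) *: ((t - l j)%:P - 'X)).[h])).
  exact: D_lin0.
apply/funext => h; rewrite Bpol_eval b0_lline lam_lline (bigD1 j) //= shift_j.
rewrite hornerZ hornerD hornerN hornerC hornerX /Pj.
rewrite (eq_bigr (fun k => t - l k)); last by move=> k hk; rewrite shift_k.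
rewrite /b /l; ring.
Qed.

Lemma pdA_l j t : (q1 l j).[0] != 0 -> (forall k, k != j -> (q2 l j k).[0] != 0) ->
  pd (fun y => (Atil N y).[t]) x (lam_idx j) =
  - (a * Pj l j t) + Pj l j t * Kc l z j + \sum_(k < g | k != j) dT2 l z j k t.
Proof.
move=> h1 h2; rewrite pd_line -D_Af_l //; congr (derive _ _ _).
apply/funext => h; rewrite Atil_eval ?b0_lline // lam_lline zc_lline //.
Qed.

End Main.


Lemma dT2E l z j k t : dT2 l z j k t =
  - (z k * P2 l k j t) / ((D2 l k j * l k) * (l k - l j))
  - (z k * P2 l k j t * (t - l j)) * (- (D2 l k j * l k))
      / ((D2 l k j * l k) * (l k - l j)) ^+ 2.
Proof.
rewrite /dT2 /p2 /q2 !derivZ !derivB !derivC !derivX !hornerZ !hornerD !hornerN.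
by rewrite !hornerC !hornerX !subr0 !sub0r !mulrN1.
Qed.

Lemma sum_antisym (S : 'I_g -> 'I_g -> R) :
  (forall j k, j != k -> S j k + S k j = 0) ->
  \sum_(j < g) \sum_(k < g | k != j) S j k = 0.
Proof.
move=> HS.
set T := fun j k => if k != j then S j k else 0.
have HT : forall j k, T j k = - T k j.
  move=> j k; rewrite /T eq_sym; case: eqP => [->|/eqP hjk] /=.
    by rewrite oppr0.
  by apply/eqP; rewrite -addr_eq0 HS // eq_sym.
have E : \sum_(j < g) \sum_(k < g | k != j) S j k = \sum_(j < g) \sum_(k < g) T j k.
  by apply: eq_bigr => j _; rewrite big_mkcond.
rewrite E; set X := \sum_(j < g) _.
have : X = - X.
  rewrite {1}/X (eq_bigr (fun j => \sum_(k < g) - T k j)); last first.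
    by move=> j _; apply: eq_bigr => k _; rewrite HT.
  rewrite exchange_big /= /X -sumrN; apply: eq_bigr => k _.
  by rewrite sumrN.
move=> hX; lra.
Qed.

Section Final.
Variables (N : nat) (x : pt R g).
Hypothesis hb : b0 N x != 0.
Hypothesis hl : forall j k : 'I_g, j != k -> lam x j != lam x k.
Hypothesis hl0 : forall j : 'I_g, lam x j != 0.

Lemma hq1 j : (q1 (lam x) j).[0] != 0.
Proof.
rewrite /q1 hornerM horner_prod hornerD hornerX hornerC add0r mulf_neq0 //.
apply/prodf_neq0 => k hk; rewrite hornerD hornerX hornerC add0r subr_eq0.
by apply: hl; rewrite eq_sym.
Qed.

Lemma D2_neq0 a b : D2 (lam x) a b != 0.
Proof.
apply/prodf_neq0 => m /andP [hm _]; rewrite subr_eq0.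
by apply: hl; rewrite eq_sym.
Qed.

Lemma hq2 j k : k != j -> (q2 (lam x) j k).[0] != 0.
Proof.
move=> hk; rewrite /q2 hornerZ hornerD hornerN hornerC hornerX subr0.
by rewrite !mulf_neq0 ?D2_neq0 // subr_eq0 hl.
Qed.

Lemma BB lmb mu :
  pbr (fun y => (Bpol N y).[lmb]) (fun y => (Bpol N y).[mu]) x = 0.
Proof.
by rewrite /pbr big1 // => j _; rewrite !pdB_z mulr0 mul0r subrr mulr0.
Qed.

Lemma Pi_split l k t : \prod_(m < g) (t - l m) = (t - l k) * Pj l k t.
Proof. by rewrite (bigD1 k). Qed.

Lemma AB lmb mu : lmb != mu ->
  pbr (fun y => (Atil N y).[lmb]) (fun y => (Bpol N y).[mu]) x =
      ((Bpol N x).[lmb] * (Atil N x).[mu] - (Atil N x).[lmb] * (Bpol N x).[mu])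
        / (lmb - mu).
Proof.
move=> hlm.
rewrite /pbr; under eq_bigr do rewrite pdB_z pdB_l (pdA_z hb).
rewrite !Bpol_eval !Atil_eval // /Af.
set l := lam x; set z := zc x; set a := a0t R N; set b := b0 N x.
set Sl := \sum_(k < g) z k * (Pj l k lmb / (Dj l k * l k)).
set Sm := \sum_(k < g) z k * (Pj l k mu / (Dj l k * l k)).
have -> : b * \prod_(k < g) (lmb - l k) * (a * \prod_(k < g) (mu - l k) + Sm) -
   (a * \prod_(k < g) (lmb - l k) + Sl) * (b * \prod_(k < g) (mu - l k)) =
   b * \prod_(k < g) (lmb - l k) * Sm - Sl * (b * \prod_(k < g) (mu - l k)) by ring.
rewrite /Sl /Sm mulr_sumr mulr_suml -sumrB mulr_suml.
apply: eq_bigr => k _.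
rewrite (Pi_split l k lmb) (Pi_split l k mu).
set I := (Dj l k * l k)^-1.
have hlm' : lmb - mu != 0 by rewrite subr_eq0.
field.
done.
Qed.

Lemma AA lmb mu :
  pbr (fun y => (Atil N y).[lmb]) (fun y => (Atil N y).[mu]) x = 0.
Proof.
set l := lam x; set z := zc x; set a := a0t R N.
pose c j t := Pj l j t / (Dj l j * l j).
pose S j k := z j * (dT2 l z j k lmb * c j mu - c j lmb * dT2 l z j k mu).
rewrite /pbr (eq_bigr (fun j => \sum_(k < g | k != j) S j k)).
  apply: sum_antisym => j k hjk.
  rewrite /S /c !dT2E.
  rewrite (Pj_split l (k:=j) (j:=k)) // (Pj_split l (k:=j) (j:=k)) //.
  rewrite (Pj_split l (k:=k) (j:=j)) 1?eq_sym // (Pj_split l (k:=k) (j:=j)) 1?eq_sym //.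
  rewrite (Dj_split l (k:=j) (j:=k)) // (Dj_split l (k:=k) (j:=j)) 1?eq_sym //.
  rewrite !(P2C l j k).
  have h1 := hl0 j; have h2 := hl0 k.
  have h3 : l j - l k != 0 by rewrite subr_eq0 hl.
  have h4 : l k - l j != 0 by rewrite subr_eq0 hl // eq_sym.
  have h5 := D2_neq0 j k; have h6 := D2_neq0 k j.
  field.
  by rewrite h1 h2 h3 h4 h5 h6.
move=> j _.
rewrite !(pdA_z hb) !(pdA_l hb _ (hq1 j) (fun k => @hq2 j k)).
rewrite -/l -/z -/a.
set Kj := Kc l z j.
set Sl := \sum_(k < g | k != j) dT2 l z j k lmb.
set Sm := \sum_(k < g | k != j) dT2 l z j k mu.
set I := (Dj l j * l j)^-1.
transitivity (z j * (Sl * (Pj l j mu * I) - (Pj l j lmb * I) * Sm)); first by ring.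
rewrite /Sl /Sm mulr_suml mulr_sumr -sumrB mulr_sumr.
by apply: eq_bigr => k _; rewrite /S /c.
Qed.

End Final.

End Alg.

Unset Implicit Arguments. Set Strict Implicit.

Theorem mainTheorem7 (R : realType) (g N : nat) (x : pt R g) (lmb mu : R) :
  (1 <= g)%N ->
  (N = g.*2.+1 \/ N = g.*2.+2) ->
  (forall j k : 'I_g, j != k -> lam x j != lam x k) ->
  (forall j : 'I_g, lam x j != 0) ->
  (~~ odd N -> vc x != 0) ->
  [/\ pbr (fun y => (Atil N y).[lmb]) (fun y => (Atil N y).[mu]) x = 0,
      pbr (fun y => (Bpol N y).[lmb]) (fun y => (Bpol N y).[mu]) x = 0
    & lmb != mu ->
      pbr (fun y => (Atil N y).[lmb]) (fun y => (Bpol N y).[mu]) x =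
      ((Bpol N x).[lmb] * (Atil N x).[mu] - (Atil N x).[lmb] * (Bpol N x).[mu])
        / (lmb - mu)].
Proof.
move=> _ _ hl hl0 hv.
have hb : b0 N x != 0.
  rewrite /b0; case: ifP => [_|/negbT ho]; first exact: oner_neq0.
  exact: hv.
split.
- exact: AA hb hl hl0 lmb mu.
- exact: BB.
- exact: AB hb lmb mu.
Qed.
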